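(* Let $\Omega\subset\mathbb H^n$ be an open, horizontally bounded and $H$-convex set. If $u:\overline\Omega\to\mathbb R$ is an $H$-convex function with $u=0$ on $\partial\Omega$, then $u\le0$. Moreover, if $\Omega$ is (Euclidean) convex, then either $u\equiv0$ on $\overline\Omega$, or $u<0$ in $\Omega$.
   Context: $\mathbb H^n=\mathbb C^n\times\mathbb R\cong\mathbb R^{2n+1}$ with real coordinates $(x,y,t)$, $z=x+iy$, group law $(z,t)\circ(z',t')=(z+z',t+t'+2\,\mathrm{Im}\langle z,z'\rangle)$, $\langle z,z'\rangle=\sum_j z_j\overline{z'_j}$. Dilations $\delta_\lambda(z,t)=(\lambda z,\lambda^2t)$. Horizontal plane at $\xi_0=(x_0,y_0,t_0)$: $H_{\xi_0}=\{(x,y,t):t=t_0+2(x\cdot y_0-x_0\cdot y)\}$. Gauge $N(z,t)=(|z|^4+t^2)^{1/4}$, $d_H(\xi,\zeta)=N(\zeta^{-1}\circ\xi)$, $\mathrm{diam}_H$ the $d_H$-diameter. A set $\tilde\Omega$ is $H$-convex if for all $\xi_1,\xi_2\in\tilde\Omega$ with $\xi_1\in H_{\xi_2}$ and $\lambda\in[0,1]$, $\xi_1\circ\delta_\lambda(\xi_1^{-1}\circ\xi_2)\in\tilde\Omega$; a function $u$ on $\tilde\Omega$ is $H$-convex if $u(\xi_1\circ\delta_\lambda(\xi_1^{-1}\circ\xi_2))\le(1-\lambda)u(\xi_1)+\lambda u(\xi_2)$ for all such $\xi_1,\xi_2,\lambda$. $\Omega$ is horizontally bounded if $\sup\{\mathrm{diam}_H(\Omega\cap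 H_\xi):\xi\in\Omega\}<\infty$. *)

(* Defs.v *)
From HB Require Import structures.
From mathcomp Require Import all_boot all_order all_algebra.
From mathcomp Require Import all_classical all_reals all_analysis.
Set Implicit Arguments.
Unset Strict Implicit.
Unset Printing Implicit Defensive.
Import Order.TTheory GRing.Theory Num.Theory.
Import numFieldNormedType.Exports.
Local Open Scope ring_scope.
Local Open Scope classical_set_scope.

(* the Heisenberg group H^n = C^n x R ~ R^(2n+1), z = x + i y,
   with the (Euclidean) product topology *)
Notation heis R n := ('rV[R]_n * 'rV[R]_n * R)%type.

Section Heis.
Variables (R : realType) (n : nat).
Local Notation heis := (heis R n).

Definition hx (p : heis) : 'rV[R]_n := p.1.1.
Definition hy (p : heis) : 'rV[R]_n := p.1.2.
Definition ht (p : heis) : R := p.2.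

Definition dotv (a b : 'rV[R]_n) : R := \sum_(j < n) a 0 j * b 0 j.

(* Im <z, z'> with <z,z'> = sum_j z_j conj(z'_j) *)
Definition im_herm (p q : heis) : R := dotv (hy p) (hx q) - dotv (hx p) (hy q).

(* group law (z,t) o (z',t') = (z+z', t+t'+2 Im<z,z'>) *)
Definition hmul (p q : heis) : heis :=
  ((hx p + hx q, hy p + hy q), ht p + ht q + 2 * im_herm p q).

Definition hinv (p : heis) : heis := ((- hx p, - hy p), - ht p).

Definition hdil (l : R) (p : heis) : heis := ((l *: hx p, l *: hy p), l ^+ 2 * ht p).

Definition hplane (xi0 : heis) : set heis :=
  [set p | ht p = ht xi0 + 2 * (dotv (hx p) (hy xi0) - dotv (hx xi0) (hy p))].

Definition gauge (p : heis) : R :=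
  Num.sqrt (Num.sqrt ((dotv (hx p) (hx p) + dotv (hy p) (hy p)) ^+ 2 + ht p ^+ 2)).

Definition dH (xi zeta : heis) : R := gauge (hmul (hinv zeta) xi).

Definition Hconvex_set (S : set heis) : Prop :=
  forall xi1 xi2 l, S xi1 -> S xi2 -> hplane xi2 xi1 -> 0 <= l <= 1 ->
    S (hmul xi1 (hdil l (hmul (hinv xi1) xi2))).

Definition Hconvex_fun (S : set heis) (u : heis -> R) : Prop :=
  forall xi1 xi2 l, S xi1 -> S xi2 -> hplane xi2 xi1 -> 0 <= l <= 1 ->
    S (hmul xi1 (hdil l (hmul (hinv xi1) xi2))) ->
    u (hmul xi1 (hdil l (hmul (hinv xi1) xi2))) <= (1 - l) * u xi1 + l * u xi2.

Definition horiz_bounded (S : set heis) : Prop :=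
  exists M : R, forall xi a b, S xi -> (S `&` hplane xi) a -> (S `&` hplane xi) b ->
    dH a b <= M.

Definition eucl_convex (S : set heis) : Prop :=
  forall a b (l : R), S a -> S b -> 0 <= l <= 1 ->
    S (((1 - l) *: hx a + l *: hx b, (1 - l) *: hy a + l *: hy b),
       (1 - l) * ht a + l * ht b).

Definition tboundary (S : set heis) : set heis := closure S `\` interior S.

End Heis.

(* Main.v *)
Require Import Defs.
From HB Require Import structures.
From mathcomp Require Import all_boot all_order all_algebra.
From mathcomp Require Import all_classical all_reals all_analysis.
From mathcomp Require Import ring lra.
Import Order.TTheory GRing.Theory Num.Theory.
Import numFieldNormedType.Exports.
Local Open Scope ring_scope.
Local Open Scope classical_set_scope.

Section T.
Variable R : realType.
Variable n : nat.
Local Notation H := (heis R n).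
Implicit Types (a b : 'rV[R]_n) (k : R).

Lemma dotvC a b : dotv a b = dotv b a.
Proof. by rewrite /dotv; apply: eq_bigr => j _; rewrite mulrC. Qed.
Lemma dotvDl a b c : dotv (a + b) c = dotv a c + dotv b c.
Proof. by rewrite /dotv -big_split; apply: eq_bigr => j _; rewrite !mxE mulrDl. Qed.
Lemma dotvDr a b c : dotv c (a + b) = dotv c a + dotv c b.
Proof. by rewrite dotvC dotvDl !(dotvC c). Qed.
Lemma dotvZl k a b : dotv (k *: a) b = k * dotv a b.
Proof. by rewrite /dotv mulr_sumr; apply: eq_bigr => j _; rewrite !mxE mulrA. Qed.
Lemma dotvZr k a b : dotv b (k *: a) = k * dotv b a.
Proof. by rewrite dotvC dotvZl dotvC. Qed.
Lemma dotvNl a b : dotv (- a) b = - dotv a b.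
Proof. by rewrite -scaleN1r dotvZl mulN1r. Qed.
Lemma dotvNr a b : dotv b (- a) = - dotv b a.
Proof. by rewrite -scaleN1r dotvZr mulN1r. Qed.
Lemma dotv0l a : dotv 0 a = 0.
Proof. by rewrite -(scale0r 0) dotvZl mul0r. Qed.
Lemma dotv0r a : dotv a 0 = 0.
Proof. by rewrite dotvC dotv0l. Qed.
Lemma dotv_ge0 a : 0 <= dotv a a.
Proof. by apply: sumr_ge0 => j _; rewrite -expr2 sqr_ge0. Qed.
Lemma dotv_eq0 a : dotv a a = 0 -> a = 0.
Proof.
move=> h; apply/rowP => j; rewrite mxE.
have /eqP := h; rewrite psumr_eq0; last by move=> i _; rewrite -expr2 sqr_ge0.
move/allP => /(_ j (mem_index_enum _)) /=; rewrite mulf_eq0 orbb => /eqP.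
by [].

Qed.

Definition hstep (p : H) (vx vy : 'rV[R]_n) : H :=
  ((hx p + vx, hy p + vy), ht p + 2 * (dotv (hy p) vx - dotv (hx p) vy)).

Lemma hstep0 p : hstep p 0 0 = p.
Proof. by case: p => [[x y] t]; rewrite /hstep /hx /hy /ht /= !addr0 !dotv0r subr0 mulr0 addr0. Qed.

Lemma hstep_comp p vx vy al be :
  hstep (hstep p (al *: vx) (al *: vy)) (be *: vx) (be *: vy) = hstep p ((al + be) *: vx) ((al + be) *: vy).
Proof.
case: p => [[x y] t]; rewrite /hstep /hx /hy /ht /=.
rewrite !scalerDl !addrA; congr (_, _).
rewrite !dotvDl !dotvDr !dotvZl ?dotvZr ?dotvZl (dotvC vx vy).
ring.
Qed.

Lemma hstep_interp p vx vy l r :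
  hmul p (hdil l (hmul (hinv p) (hstep p (r *: vx) (r *: vy)))) = hstep p ((l * r) *: vx) ((l * r) *: vy).
Proof.
case: p => [[x y] t]; rewrite /hstep /hmul /hdil /hinv /im_herm /hx /hy /ht /=.
rewrite !(addrA (-x)) !(addrA (-y)) !(addNr) !add0r; congr (_, _).
  by rewrite !scalerA.
rewrite !dotvDr !dotvNl !dotvZr (dotvC x y).
ring.
Qed.

Lemma hstep_plane p vx vy : hplane (hstep p vx vy) p.
Proof.
case: p => [[x y] t]; rewrite /hplane /hstep /hx /hy /ht /=.
rewrite !dotvDl !dotvDr (dotvC x y) (dotvC vx y). ring.
Qed.

Lemma hstep_plane' p vx vy : hplane p (hstep p vx vy).
Proof.
case: p => [[x y] t]; rewrite /hplane /hstep /hx /hy /ht /=.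
rewrite !dotvDl !dotvDr (dotvC x y) (dotvC vx y). ring.
Qed.

Lemma hstep_gauge p vx vy :
  gauge (hmul (hinv p) (hstep p vx vy)) = Num.sqrt (Num.sqrt ((dotv vx vx + dotv vy vy) ^+ 2)).
Proof.
case: p => [[x y] t]; rewrite /gauge /hstep /hmul /hinv /im_herm /hx /hy /ht /=.
rewrite !(addrA (-x)) !(addrA (-y)) !(addNr) !add0r.
rewrite !dotvDr !dotvNl (dotvC x y).
set e := (X in X ^+ 2 + _ ^+ 2).
set z := (X in e ^+ 2 + X ^+ 2).
have -> : z = 0 by rewrite /z; ring.
by rewrite expr0n /= addr0.
Qed.

Lemma cont_sum (T : topologicalType) (I : Type) (r : seq I) (f : I -> T -> R) x :
  (forall i, {for x, continuous (f i)}) -> {for x, continuous (fun y => \sum_(i <- r) f i y)}.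
Proof.
move=> hf; elim: r => [|i r IH].
  have -> : (fun y => \sum_(i <- [::]) f i y) = fun=> 0 by apply/funext => y; rewrite big_nil.
  exact: cvg_cst.
have -> : (fun y => \sum_(j <- i :: r) f j y) = fun y => f i y + \sum_(j <- r) f j y.
  by apply/funext => y; rewrite big_cons.
exact: (cvgD (hf i) IH).
Qed.

Lemma cont_dotv {T : topologicalType} {f g : T -> 'rV[R]_n} {x} :
  {for x, continuous f} -> {for x, continuous g} -> {for x, continuous (fun y => dotv (f y) (g y))}.
Proof.
move=> hf hg. rewrite /dotv. apply: cont_sum => i.
apply: cvgM.
- exact: (continuous_comp hf (@coord_continuous R 1 n 0 i (f x))).
- exact: (continuous_comp hg (@coord_continuous R 1 n 0 i (g x))).
Qed.

Lemma cont_fst {U V T : topologicalType} {f : T -> U * V} {x} :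
  {for x, continuous f} -> {for x, continuous (fun y => (f y).1)}.
Proof. move=> hf. apply: (continuous_comp hf). apply: cvg_fst. Qed.

Lemma cont_snd {U V T : topologicalType} {f : T -> U * V} {x} :
  {for x, continuous f} -> {for x, continuous (fun y => (f y).2)}.
Proof. move=> hf. apply: (continuous_comp hf). apply: cvg_snd. Qed.

Lemma cont_pair {T U V : topologicalType} {f : T -> U} {g : T -> V} {x} :
  {for x, continuous f} -> {for x, continuous g} -> {for x, continuous (fun y => (f y, g y))}.
Proof. move=> hf hg. exact: cvg_pair. Qed.

Lemma cont_hstep (T : topologicalType) (F : T -> H) (g h : T -> 'rV[R]_n) x :
  {for x, continuous F} -> {for x, continuous g} -> {for x, continuous h} ->
  {for x, continuous (fun y => hstep (F y) (g y) (h y))}.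
Proof.
move=> hF hg hh; rewrite /hstep /hx /hy /ht.
have F11 := cont_fst (cont_fst hF).
have F12 := cont_snd (cont_fst hF).
have F2 := cont_snd hF.
apply: cont_pair; first apply: cont_pair.
- exact: (cvgD F11 hg).
- exact: (cvgD F12 hh).
apply: (cvgD F2); apply: cvgM; first exact: cvg_cst.
exact: (cvgB (cont_dotv F12 hg) (cont_dotv F11 hh)).
Qed.

Lemma nbhsR_eps (x : R) (P : set R) : nbhs x P -> exists2 e, 0 < e & forall y, `|x - y| < e -> P y.
Proof. move/nbhs_ballP=> [e e0 He]; exists e => // y hy; apply: He; rewrite -ball_normE /=; exact: hy. Qed.


Lemma cont_line (a : H) vx vy : continuous (fun s : R => hstep a (s *: vx) (s *: vy)).
Proof.
move=> s; apply: (@cont_hstep R (fun=> a) (fun s : R => s *: vx) (fun s : R => s *: vy) s); first exact: cvg_cst.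
- apply: cvgZ; [exact: cvg_id | exact: cvg_cst].
- apply: cvgZ; [exact: cvg_id | exact: cvg_cst].
Qed.

Section Main.
Variables (Om : set H) (u : H -> R).
Hypothesis hO : open Om.
Hypothesis hB : horiz_bounded Om.

Lemma Om_nbhs {a : H} : Om a -> nbhs a Om.
Proof. by move=> ha; have := hO; rewrite openE => /(_ a ha). Qed.

Lemma exit (a : H) vx vy : Om a -> 0 < dotv vx vx + dotv vy vy ->
  exists2 s, 0 < s & tboundary Om (hstep a (s *: vx) (s *: vy)).
Proof.
move=> ha hN; set N := dotv vx vx + dotv vy vy in hN.
pose L := fun s : R => hstep a (s *: vx) (s *: vy).
have L0 : L 0 = a by rewrite /L !scale0r hstep0.
have [M hM] := hB.
have pa : hplane a a by have := hstep_plane' a 0 0; rewrite hstep0.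
have bnd : forall r, Om (L r) -> r ^+ 2 * N <= M ^+ 2.
  move=> r hr.
  have := hM a (L r) a ha (conj hr (hstep_plane' _ _ _)) (conj ha pa).
  rewrite /dH hstep_gauge !dotvZl !dotvZr.
  have -> : r * (r * dotv vx vx) + r * (r * dotv vy vy) = r ^+ 2 * N by rewrite /N; ring.
  have K0 : 0 <= r ^+ 2 * N by rewrite mulr_ge0 ?sqr_ge0 ?ltW.
  rewrite sqrtr_sqr ger0_norm // => h.
  have M0 : 0 <= M := le_trans (sqrtr_ge0 _) h.
  rewrite -(sqr_sqrtr K0).
  have := sqrtr_ge0 (r ^+ 2 * N); nra.
pose A := [set s | 0 <= s /\ forall r, 0 <= r <= s -> Om (L r)].
have A0 : A 0.
  split=> // r hr; have -> : r = 0 by apply/le_anti; rewrite andbC.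
  by rewrite L0.
have ubA : ubound A (1 + M ^+ 2 / N).
  move=> s [s0 hs]; have := bnd s (hs s _); rewrite s0 lexx => /(_ isT) hb.
  rewrite -(ler_pM2r hN) mulrDl mul1r divfK; last by rewrite gt_eqF.
  nra.
have hsA : has_sup A by split; [exists 0 | exists (1 + M ^+ 2 / N)].
set sig := sup A.
have sub : forall s, A s -> s <= sig by move=> s; apply: sup_upper_bound.
have adh : forall e, 0 < e -> exists2 s, A s & sig - e < s.
  by move=> e e0; apply: sup_adherent.
have Lc := cont_line a vx vy.
have sig0 : 0 < sig.
  have := Lc 0 Om; rewrite -/(L 0) L0 => /(_ (Om_nbhs ha)) /nbhsR_eps [e e0 He].
  have Ae : A (e / 2).
    split; first by rewrite divr_ge0 // ltW.
    move=> r /andP[r0 re]; apply: He; rewrite sub0r normrN ger0_norm //.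
    by apply: le_lt_trans re _; rewrite ltr_pdivrMr // ltr_pMr // ltr1n.
  by apply: lt_le_trans (sub _ Ae); rewrite divr_gt0.
have notOm : ~ Om (L sig).
  move=> hs; have := Lc sig Om (Om_nbhs hs) => /nbhsR_eps [e e0 He].
  have [s [s0 As] hs'] := adh (e / 2) (divr_gt0 e0 (ltr0Sn _ 1)).
  have : A (sig + e / 2).
    split; first by rewrite addr_ge0 ?divr_ge0 ?ltW.
    move=> r /andP[r0 re]; case: (lerP r s) => rs; first by apply: As; rewrite r0 rs.
    apply: He.
    rewrite ltr_distlC; apply/andP; split; lra.
  move/sub; lra.
have clo : closure Om (L sig).
  move=> B hBn; have := Lc sig B hBn => /nbhsR_eps [e e0 He].
  have [s [s0 As] hs'] := adh e e0.
  have ss := sub s (conj s0 As).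
  exists (L s); split; first by apply: As; rewrite s0 lexx.
  by apply: He; rewrite ger0_norm ?subr_ge0 //; lra.
exists sig => //; split => // /interior_subset; exact: notOm.
Qed.

Hypothesis hC : Hconvex_fun (closure Om) u.
Hypothesis hbd : forall xi, tboundary Om xi -> u xi = 0.
Hypothesis hn : (0 < n)%N.

Lemma between (a : H) vx vy s1 s2 : 0 < s1 -> 0 < s2 ->
  closure Om (hstep a ((- s1) *: vx) ((- s1) *: vy)) ->
  closure Om (hstep a (s2 *: vx) (s2 *: vy)) -> closure Om a ->
  u a <= (s2 / (s1 + s2)) * u (hstep a ((- s1) *: vx) ((- s1) *: vy))
         + (s1 / (s1 + s2)) * u (hstep a (s2 *: vx) (s2 *: vy)).
Proof.
move=> s10 s20; set w1 := hstep a _ _ => c1 c2 ca.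
have e2 : hstep a (s2 *: vx) (s2 *: vy) = hstep w1 ((s1 + s2) *: vx) ((s1 + s2) *: vy).
  by rewrite /w1 hstep_comp addrA addNr add0r.
have s12 : s1 + s2 != 0 by rewrite gt_eqF // addr_gt0.
set l := s1 / (s1 + s2).
have ea : hmul w1 (hdil l (hmul (hinv w1) (hstep w1 ((s1 + s2) *: vx) ((s1 + s2) *: vy)))) = a.
  by rewrite hstep_interp /l divfK // /w1 hstep_comp addNr !scale0r hstep0.
have l01 : 0 <= l <= 1.
  apply/andP; split; first by rewrite /l divr_ge0 ?ltW ?addr_gt0.
  by rewrite /l ler_pdivrMr ?addr_gt0 // mul1r lerDl ltW.
rewrite e2 in c2 *.
have := hC _ _ _ c1 c2 (hstep_plane _ _ _) l01; rewrite ea => /(_ ca).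
suff -> : 1 - l = s2 / (s1 + s2) by [].
by rewrite /l; field; rewrite s12.
Qed.

Definition e1 : 'rV[R]_n := const_mx 1.
Lemma dotv_e1 : dotv e1 e1 = n%:R.
Proof.
rewrite /dotv /e1; under eq_bigr do rewrite !mxE mulr1.
by rewrite sumr_const card_ord.
Qed.

Lemma nonpos_in (a : H) : Om a -> u a <= 0.
Proof.
move=> ha.
have hN : 0 < dotv e1 e1 + dotv e1 e1 by rewrite dotv_e1 addr_gt0 ?ltr0n.
have hN' : 0 < dotv (- e1) (- e1) + dotv (- e1) (- e1) by rewrite dotvNl dotvNr opprK.
have [s2 s20 b2] := exit _ _ _ ha hN.
have [s1 s10 b1] := exit _ _ _ ha hN'.
rewrite scalerN -scaleNr in b1.
have := between a e1 e1 s1 s2 s10 s20 (proj1 b1) (proj1 b2) (subset_closure ha).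
by rewrite (hbd _ b1) (hbd _ b2) !mulr0 addr0.
Qed.

Lemma nonpos (a : H) : closure Om a -> u a <= 0.
Proof.
move=> ca; case: (pselect (Om a)) => [ha|nha]; first exact: nonpos_in.
by rewrite hbd //; split => // /interior_subset.
Qed.

Lemma propag (a : H) vx vy : Om a -> u a = 0 -> closure Om (hstep a vx vy) ->
  u (hstep a vx vy) = 0.
Proof.
move=> ha ua cb.
have [N0|hN] := eqVneq (dotv vx vx + dotv vy vy) 0.
  have gx := dotv_ge0 vx; have gy := dotv_ge0 vy.
  have -> : vx = 0 by apply: dotv_eq0; lra.
  have -> : vy = 0 by apply: dotv_eq0; lra.
  by rewrite hstep0.
have hN' : 0 < dotv (- vx) (- vx) + dotv (- vy) (- vy).
  rewrite dotvNl dotvNr opprK dotvNl dotvNr opprK lt_neqAle eq_sym hN /=.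
  by rewrite addr_ge0 ?dotv_ge0.
have [s1 s10 b1] := exit _ _ _ ha hN'.
rewrite scalerN -scaleNr scalerN -scaleNr in b1.
have cb' : closure Om (hstep a (1 *: vx) (1 *: vy)) by rewrite !scale1r.
have := between a vx vy s1 1 s10 ltr01 (proj1 b1) cb' (subset_closure ha).
rewrite (hbd _ b1) mulr0 add0r !scale1r ua => h.
apply/le_anti; rewrite nonpos //=.
by move: h; rewrite pmulr_rge0 // divr_gt0 // addr_gt0.
Qed.

Lemma hstep_back (a : H) vx vy : hstep (hstep a vx vy) (- vx) (- vy) = a.
Proof.
case: a => [[x y] t]; rewrite /hstep /hx /hy /ht /= !addrK; congr (_, _).
rewrite !dotvDl !dotvNr (dotvC vy vx); ring.
Qed.

Lemma step_iff (a b : H) vx vy : Om a -> Om b -> b = hstep a vx vy -> (u a = 0 <-> u b = 0).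
Proof.
move=> ha hb E; subst b; split=> h.
  exact: (propag _ _ _ ha h (subset_closure hb)).
rewrite -(hstep_back a vx vy); apply: (propag _ _ _ hb h).
by rewrite hstep_back; exact: (subset_closure ha).
Qed.


Definition Good (p : H) (F : H -> H) := {for p, continuous F} /\ F p = p /\
  exists W, nbhs p W /\ forall q, W q -> Om (F q) /\ (u p = 0 <-> u (F q) = 0).

Lemma Good_const (p : H) : Om p -> Good p (fun=> p).
Proof.
move=> hp; split; first exact: cvg_cst.
split=> //; exists setT; split; first exact: filterT.
by move=> q _; split.
Qed.

Lemma Good_step (p : H) (F : H -> H) (g h : H -> 'rV[R]_n) : Good p F -> {for p, continuous g} -> g p = 0 ->
  {for p, continuous h} -> h p = 0 -> Good p (fun q => hstep (F q) (g q) (h q)).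
Proof.
move=> [cF [Fp [W [hW HW]]]] cg g0 ch h0.
have cG := @cont_hstep _ F g h p cF cg ch.
have Gp : hstep (F p) (g p) (h p) = p by rewrite Fp g0 h0 hstep0.
have Op : Om p by rewrite -Fp; exact: (HW p (nbhs_singleton hW)).1.
split=> //; split=> //.
exists (W `&` [set q | Om (hstep (F q) (g q) (h q))]); split.
  apply: filterI; first exact: hW.
  by have := cG Om; rewrite Gp => /(_ (Om_nbhs Op)).
move=> q [Wq Oq]; have [OF iff] := HW q Wq; split => //.
rewrite iff; exact: (step_iff _ _ _ _ OF Oq erefl).
Qed.

Lemma comm4 (c : H) s r s' r' : s' = - s -> r' = - r ->
  hstep (hstep (hstep (hstep c (s *: e1) 0) 0 (r *: e1)) (s' *: e1) 0) 0 (r' *: e1)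
  = ((hx c, hy c), ht c - 4 * s * r * n%:R).
Proof.
move=> -> ->; case: c => [[x y] t]; rewrite /hstep /hx /hy /ht /= !addr0.
congr (_, _); first by rewrite !scaleNr !addrK.
rewrite !dotv0r !dotvDl !dotvZl !dotvZr dotv_e1; ring.
Qed.


Lemma local (p : H) : Om p ->
  exists W, nbhs p W /\ forall q, W q -> Om q /\ (u p = 0 <-> u q = 0).
Proof.
move=> Op.
have cid : {for p, continuous (fun q : H => q)} by exact: cvg_id.
pose dx (q : H) := hx q - hx p.
pose dy (q : H) := hy q - hy p.
have cdx : {for p, continuous dx} by apply: cvgB; [exact: (cont_fst (cont_fst cid)) | exact: cvg_cst].
have cdy : {for p, continuous dy} by apply: cvgB; [exact: (cont_snd (cont_fst cid)) | exact: cvg_cst].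
have c0 : {for p, continuous (fun _ : H => (0 : 'rV[R]_n))} by exact: cvg_cst.
pose C1 q := hstep p (dx q) 0.
have G1 : Good p C1 := Good_step _ _ _ _ (Good_const _ Op) cdx (subrr _) c0 erefl.
pose C2 q := hstep (C1 q) 0 (dy q).
have G2 : Good p C2 := Good_step _ _ _ _ G1 c0 erefl cdy (subrr _).
pose D q := ht q - ht (C2 q).
have cD : {for p, continuous D}.
  apply: cvgB; [exact: (cont_snd cid) | exact: (cont_snd G2.1)].
have D0 : D p = 0 by rewrite /D G2.2.1 subrr.
pose E := (n%:R : R).
have E0 : 0 < E by rewrite ltr0n.
pose A q := Num.sqrt ((D q + `|D q|) / (8 * E)).
pose B q := Num.sqrt ((`|D q| - D q) / (8 * E)).
have cA : {for p, continuous A}.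
  apply: (continuous_comp _ (@sqrt_continuous R _)).
  apply: cvgM; last exact: cvg_cst.
  apply: cvgD; [exact: cD | exact: cvg_norm cD].
have cB : {for p, continuous B}.
  apply: (continuous_comp _ (@sqrt_continuous R _)).
  apply: cvgM; last exact: cvg_cst.
  apply: cvgB; [exact: cvg_norm cD | exact: cD].
have A0 : A p = 0 by rewrite /A D0 normr0 addr0 mul0r sqrtr0.
have B0 : B p = 0 by rewrite /B D0 normr0 subr0 mul0r sqrtr0.
have cZ : forall f : H -> R, {for p, continuous f} -> {for p, continuous (fun q => f q *: e1)}.
  by move=> f cf; apply: cvgZ; [exact: cf | exact: cvg_cst].
have cZN : forall f : H -> R, {for p, continuous f} -> {for p, continuous (fun q => - f q *: e1)}.
  by move=> f cf; apply: cvgZ; [exact: cvgN cf | exact: cvg_cst].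
have z0 : forall x : R, x = 0 -> x *: e1 = 0 by move=> x ->; rewrite scale0r.
have zN : forall x : R, x = 0 -> - x *: e1 = 0 by move=> x ->; rewrite oppr0 scale0r.
pose C3 q := hstep (C2 q) (A q *: e1) 0.
have G3 : Good p C3 := Good_step _ _ _ _ G2 (cZ _ cA) (z0 _ A0) c0 erefl.
pose C4 q := hstep (C3 q) 0 (- A q *: e1).
have G4 : Good p C4 := Good_step _ _ _ _ G3 c0 erefl (cZN _ cA) (zN _ A0).
pose C5 q := hstep (C4 q) (- A q *: e1) 0.
have G5 : Good p C5 := Good_step _ _ _ _ G4 (cZN _ cA) (zN _ A0) c0 erefl.
pose C6 q := hstep (C5 q) 0 (A q *: e1).
have G6 : Good p C6 := Good_step _ _ _ _ G5 c0 erefl (cZ _ cA) (z0 _ A0).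
pose C7 q := hstep (C6 q) (B q *: e1) 0.
have G7 : Good p C7 := Good_step _ _ _ _ G6 (cZ _ cB) (z0 _ B0) c0 erefl.
pose C8 q := hstep (C7 q) 0 (B q *: e1).
have G8 : Good p C8 := Good_step _ _ _ _ G7 c0 erefl (cZ _ cB) (z0 _ B0).
pose C9 q := hstep (C8 q) (- B q *: e1) 0.
have G9 : Good p C9 := Good_step _ _ _ _ G8 (cZN _ cB) (zN _ B0) c0 erefl.
pose C10 q := hstep (C9 q) 0 (- B q *: e1).
have G10 : Good p C10 := Good_step _ _ _ _ G9 c0 erefl (cZN _ cB) (zN _ B0).
have C10q : forall q, C10 q = q.
  move=> q.
  have e6 : C6 q = ((hx (C2 q), hy (C2 q)), ht (C2 q) - 4 * A q * (- A q) * n%:R).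
    by apply: comm4 => //; rewrite opprK.
  have e10 : C10 q = ((hx (C6 q), hy (C6 q)), ht (C6 q) - 4 * B q * B q * n%:R).
    exact: comm4.
  rewrite e10 e6 /hx /hy /ht /=.
  have hA : A q ^+ 2 = (D q + `|D q|) / (8 * E).
    apply: sqr_sqrtr; apply: divr_ge0; last by rewrite mulr_ge0 // ltW.
    have := ler_norm (D q); have : - D q <= `|D q| by rewrite -normrN ler_norm.
    lra.
  have hB' : B q ^+ 2 = (`|D q| - D q) / (8 * E).
    apply: sqr_sqrtr; apply: divr_ge0; last by rewrite mulr_ge0 // ltW.
    have := ler_norm (D q); lra.
  have eD : ht (C2 q) - 4 * A q * - A q * n%:R - 4 * B q * B q * n%:R = ht (C2 q) + D q.
    have -> : ht (C2 q) - 4 * A q * - A q * n%:R - 4 * B q * B q * n%:R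
      = ht (C2 q) + 4 * E * (A q ^+ 2 - B q ^+ 2) by rewrite /E; ring.
    rewrite hA hB'; congr (_ + _); field; rewrite gt_eqF //.
  rewrite eD /D [ht (C2 q) + _]addrC subrK.
  case: q {e6 e10 hA hB' eD} => [[x y] t].
  rewrite /C2 /C1 /hstep /dx /dy /hx /hy /ht /= !addr0.
  by rewrite [p.1.1 + _]addrC [p.1.2 + _]addrC !subrK.
have [_ [_ [W [hW HW]]]] := G10.
exists W; split; first exact: hW.
by move=> q Wq; have := HW q Wq; rewrite C10q.
Qed.


Lemma zero_all (x0 : H) : eucl_convex Om -> Om x0 -> u x0 = 0 -> forall q, Om q -> u q = 0.
Proof.
move=> hE Ox0 ux0 q Oq.
pose gx (s : R) := (1 - s) *: hx x0 + s *: hx q.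
pose gy (s : R) := (1 - s) *: hy x0 + s *: hy q.
pose gt (s : R) := (1 - s) * ht x0 + s * ht q.
pose g (s : R) : H := ((gx s, gy s), gt s).
have cg : continuous g.
  move=> s; apply: (@cont_pair R _ _ (fun s => (gx s, gy s)) gt s).
    apply: (@cont_pair R _ _ gx gy s).
    - apply: cvgD; apply: cvgZ; (try exact: cvg_cst); (try exact: cvg_id).
      apply: cvgB; [exact: cvg_cst | exact: cvg_id].
    - apply: cvgD; apply: cvgZ; (try exact: cvg_cst); (try exact: cvg_id).
      apply: cvgB; [exact: cvg_cst | exact: cvg_id].
  - apply: cvgD; apply: cvgM; (try exact: cvg_cst); (try exact: cvg_id).
    apply: cvgB; [exact: cvg_cst | exact: cvg_id].
have gO : forall s, 0 <= s <= 1 -> Om (g s) by move=> s hs; exact: hE.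
have g1 : g 1 = q.
  rewrite /g /gx /gy /gt subrr !scale0r mul0r !add0r scale1r mul1r /hx /hy /ht.
  by rewrite scale1r; case: (q) => [[x y] t].
have g0 : g 0 = x0.
  rewrite /g /gx /gy /gt subr0 !scale0r mul0r !addr0 !scale1r mul1r /hx /hy /ht.
  by case: (x0) => [[x y] t].
pose A := [set s : R | 0 <= s <= 1 /\ u (g s) = 0].
have A0 : A 0 by split; [rewrite lexx ler01 | rewrite g0].
have ubA : ubound A 1 by move=> s [/andP[_ ?] _].
have hsA : has_sup A by split; [exists 0 | exists 1].
set sig := sup A.
have sub : forall s, A s -> s <= sig by move=> s; apply: sup_upper_bound.
have sig0 : 0 <= sig := sub 0 A0.
have sig1 : sig <= 1 by apply: ge_sup => //; exists 0.
have Osig : Om (g sig) by apply: gO; rewrite sig0 sig1.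
have [W [hW HW]] := local (g sig) Osig.
have [e e0 He] := nbhsR_eps _ _ (cg sig W hW).
have [t0 [/andP[t00 t01] ut0] ht0] := sup_adherent e0 hsA.
rewrite -/sig in ht0.
have t0s := sub t0 (conj (introT andP (conj t00 t01)) ut0).
have usig : u (g sig) = 0.
  have ht0e : `|sig - t0| < e by rewrite ger0_norm ?subr_ge0 //; lra.
  have [_ hiff] := HW (g t0) (He t0 ht0e).
  by rewrite hiff.
have [sig_lt1|sig_ge1] := ltP sig 1; last first.
  have -> : q = g sig by rewrite -g1; congr g; apply/le_anti; rewrite sig1 sig_ge1.
  exact: usig.
exfalso.
pose t1 := if sig + e / 2 <= 1 then sig + e / 2 else 1.
have t1a : sig < t1 /\ t1 <= 1 /\ `|sig - t1| < e.
  rewrite /t1; case: ifP => h; rewrite distrC.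
    rewrite ger0_norm; last lra.
    split; [lra | split; [exact: h | lra]].
  rewrite ger0_norm; last lra.
  move/negbT: h; rewrite -ltNge => h; split; [lra | split; [exact: lexx | lra]].
have [t1s [t11 t1e]] := t1a.
have [_ hiff] := HW (g t1) (He t1 t1e).
have At1 : A t1.
  split; first by apply/andP; split; lra.
  by rewrite -hiff.
have := sub t1 At1; lra.
Qed.

Lemma main_in : (forall xi, closure Om xi -> u xi <= 0) /\
  (eucl_convex Om -> (forall xi, closure Om xi -> u xi = 0) \/ (forall xi, Om xi -> u xi < 0)).
Proof.
split; first exact: nonpos.
move=> hE; case: (pselect (exists x0, Om x0 /\ u x0 = 0)) => [[x0 [Ox0 ux0]] | nz].
  left => xi cxi; case: (pselect (Om xi)) => [Oxi|nOxi]; first exact: (zero_all x0 hE Ox0 ux0).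
  by apply: hbd; split => // /interior_subset.
right => xi Oxi; rewrite lt_neqAle nonpos ?andbT; last exact: subset_closure.
by apply/eqP => h; apply: nz; exists xi.
Qed.

End Main.
End T.

Theorem proposition2p4 (R : realType) (n : nat) (Omega : set (heis R n))
  (u : heis R n -> R) :
  (1 <= n)%N ->
  open Omega -> horiz_bounded Omega -> Hconvex_set Omega ->
  Hconvex_fun (closure Omega) u ->
  (forall xi, tboundary Omega xi -> u xi = 0) ->
  (forall xi, closure Omega xi -> u xi <= 0) /\
  (eucl_convex Omega ->
     (forall xi, closure Omega xi -> u xi = 0) \/ (forall xi, Omega xi -> u xi < 0)).
Proof.
move=> hn hO hB _ hC hbd.
by apply: main_in.
Qed.
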